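(* Let $p$ be a prime and $l \ge 1$ an integer with $l \mid (p-1)$, and set $q = pl$. For $\Delta \in Z_q$ let $\omega_\Delta : Z_q \to Z_q$, $u \mapsto (u+\Delta) \bmod q$. Then $$ P = \{\omega_{1+il} : i \in \{0,1,\ldots,p-1\},\ i \neq (p-1)/l\} $$ consists of $p-1$ distinct cyclic permutations of $Z_q$ with orbit $Z_q$, $P$ is a $(pl,l)$-proper set, and $|P| = p-1 = \lfloor (pl-1)/l \rfloor$, i.e. $P$ attains the upper bound $|P| \le \lfloor (q-1)/l \rfloor$ valid for every $(q,l)$-proper set (so $P$ is quasiperfect).
   Context: Let $Z_q = \{0,1,\ldots,q-1\}$. A permutation $\sigma$ of $Z_q$ is called cyclic with orbit $Z_q$ if it consists of a single cycle containing all $q$ elements. For a permutation $\sigma$, $\sigma^\beta$ denotes its $\beta$-fold composition with itself. A set $P$ of cyclic permutations of $Z_q$ with orbit $Z_q$ is called $(q,l)$-proper (for an integer $l$ with $1 \le l < q$) if for every ordered pair $(u,v) \in Z_q^2$ there is at most one $\sigma \in P$ such that $v = \sigma^\beta[u]$ for some $\beta \in \{1,\ldots,l\}$. A $(q,l)$-proper set is called quasiperfect if $|P| = \lfloor (q-1)/l \rfloor$. *)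

(* Defs.v *)
From mathcomp Require Import all_boot all_fingroup.
Set Implicit Arguments. Unset Strict Implicit. Unset Printing Implicit Defensive.

(* Z_q is modelled as 'I_q; permutations of Z_q are {perm 'I_q}. *)

Definition cyclic_full (q : nat) (s : {perm 'I_q}) : Prop :=
  forall x : 'I_q, porbit s x = [set: 'I_q].

Definition reach (q l : nat) (s : {perm 'I_q}) (u v : 'I_q) : Prop :=
  exists beta : nat, 1 <= beta <= l /\ v = (s ^+ beta)%g u.

Definition proper_set (q l : nat) (P : {set {perm 'I_q}}) : Prop :=
  [/\ 1 <= l < q,
      (forall s, s \in P -> cyclic_full s) &
      forall (u v : 'I_q) (s1 s2 : {perm 'I_q}),
        s1 \in P -> s2 \in P -> reach l s1 u v -> reach l s2 u v -> s1 = s2].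

Definition quasiperfect (q l : nat) (P : {set {perm 'I_q}}) : Prop :=
  proper_set l P /\ #|P| = (q - 1) %/ l.

Definition omega_fun (q D : nat) (u : 'I_q) : 'I_q :=
  Ordinal (ltn_pmod (u + D) (leq_ltn_trans (leq0n u) (ltn_ord u))).

Lemma omega_fun_inj q D : injective (@omega_fun q D).
Proof.
move=> u v /(congr1 val) /= /eqP; rewrite eqn_modDr => /eqP.
by rewrite !modn_small // => /val_inj.
Qed.

Definition omega (q D : nat) : {perm 'I_q} := perm (@omega_fun_inj q D).

(* Main.v *)
Require Import Defs.
From mathcomp Require Import all_boot all_fingroup.
From mathcomp Require Import zify.
Set Implicit Arguments. Unset Strict Implicit. Unset Printing Implicit Defensive.

Lemma mod_cancel p b i j : coprime p b -> i < p -> j < p ->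
  b * i = b * j %[mod p] -> i = j.
Proof.
move=> cpb ip jp.
wlog le_ij : i j ip jp / i <= j.
  move=> H E; case: (leqP i j) => [h|h]; first exact: H.
  symmetry; apply: H => //; exact: ltnW.
move=> /eqP; rewrite eq_sym eqn_mod_dvd; last by rewrite leq_mul2l le_ij orbT.
rewrite -mulnBr Gauss_dvdr //.
case: (ltnP i j) => [lt_ij|h]; last by move=> _; apply/eqP; rewrite eqn_leq le_ij.
have : 0 < j - i by rewrite subn_gt0.
move=> h /(dvdn_leq h) h2. lia.
Qed.

Lemma omegaX q D k (x : 'I_q) : val ((omega q D ^+ k)%g x) = (x + k * D) %% q.
Proof.
elim: k => [|k IH]; first by rewrite expg0 perm1 addn0 modn_small.
rewrite expgSr permM /omega permE /= IH modnDml mulSn; congr (_ %% _); lia.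
Qed.

Lemma omega_cyclic q D : 0 < q -> coprime q D -> cyclic_full (omega q D).
Proof.
move=> q0 cqD x; apply/setP => y; rewrite inE; apply/porbitP.
have [a _ ha] := Bezoutl D q0.
rewrite (eqP cqD) in ha.
exists (a * (x + (q - y))); apply: val_inj; rewrite omegaX.
suff: (x + a*(x+(q-y))*D) = y %[mod q] by rewrite (modn_small (ltn_ord y)).
apply/eqP; rewrite -(eqn_modDr (x + (q - y))).
have -> : y + (x + (q - y)) = x + q * 1 by have := ltn_ord y; lia.
rewrite muln1 modnDr -addnA.
have -> : a * (x + (q - y)) * D + (x + (q - y)) = (x + (q - y)) * (1 + a * D) by nia.
rewrite -modnDmr -modnMmr.
by move: ha; rewrite /dvdn => /eqP ->; rewrite muln0 mod0n addn0.
Qed.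

Lemma mulmod_cancel p l i j : 0 < l -> i * l = j * l %[mod p * l] -> i = j %[mod p].
Proof.
move=> l0; rewrite -!muln_modl => /eqP; rewrite eqn_pmul2r // => /eqP //.
Qed.

Lemma mod_small_eq l a b : 1 <= a <= l -> 1 <= b <= l -> a = b %[mod l] -> a = b.
Proof.
move=> /andP[a1 al] /andP[b1 bl] h.
have : a - 1 = b - 1 %[mod l].
  apply/eqP; rewrite -(eqn_modDr 1) !subnK //; exact/eqP.
rewrite !modn_small; [lia | lia | lia].
Qed.

Theorem theorem2 (p l : nat) (hp : prime p) (hl : 0 < l) (hdvd : l %| p - 1) :
  let q := p * l in
  let P := [set omega q (1 + i * l) | i : 'I_p & (i : nat) != (p - 1) %/ l] in
  [/\ #|P| = p - 1,
      (forall s, s \in P -> cyclic_full s),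
      proper_set l P,
      p - 1 = (p * l - 1) %/ l
    & quasiperfect l P].
Proof.
move=> q P.
have p1 := prime_gt1 hp.
have lp : l < p.
  have h0 : 0 < p - 1 by lia.
  have := dvdn_leq h0 hdvd; lia.
set i0 := (p - 1) %/ l.
have i0l : i0 * l = p - 1 by rewrite divnK.
have i0p : i0 < p.
  have : i0 <= i0 * l by rewrite leq_pmulr.
  lia.
have q0 : 0 < q by rewrite muln_gt0 hl; lia.
have cpb b : 0 < b -> b < p -> coprime p b.
  move=> b0 bp; rewrite prime_coprime //; apply/negP => /(dvdn_leq b0); lia.
have cop (i : 'I_p) : (i : nat) != i0 -> coprime q (1 + i * l).
  move=> ne; rewrite /q coprimeMl; apply/andP; split.
    rewrite prime_coprime //; apply/negP => hd.
    have : l * i = l * i0 %[mod p].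
      apply/eqP; rewrite -(eqn_modDl 1) [l * i]mulnC [l * i0]mulnC i0l.
      have -> : 1 + (p - 1) = p by lia.
      by rewrite modnn; move: hd; rewrite /dvdn => /eqP ->.
    move/(mod_cancel (cpb _ hl lp) (ltn_ord i) i0p) => E; by rewrite E eqxx in ne.
  by rewrite /coprime addnC gcdnMDl gcdn1.
have memP s : s \in P -> exists2 i : 'I_p, (i : nat) != i0 & s = omega q (1 + i * l).
  by move=> /imsetP[i]; rewrite inE => hi ->; exists i.
have cyc : forall s, s \in P -> cyclic_full s.
  by move=> s /memP[i hi ->]; apply: omega_cyclic => //; exact: cop.
have eqi (i j : 'I_p) : 1 + i * l = 1 + j * l %[mod q] -> i = j.
  move=> /eqP; rewrite eqn_modDl => /eqP /(mulmod_cancel hl).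
  by rewrite !modn_small // => /val_inj.
have card : #|P| = p - 1.
  rewrite card_in_imset.
    rewrite (@eq_card _ _ (predC1 (Ordinal i0p))) ?cardC1 ?card_ord; first lia.
    by move=> i; rewrite !inE -val_eqE.
  move=> i j _ _ E; apply: eqi.
  have x0 : 'I_q := Ordinal q0.
  have := congr1 (fun s : {perm 'I_q} => val (s (Ordinal q0))) E.
  by rewrite /omega !permE /=.
have prop : proper_set l P.
  split; [apply/andP; split => //; rewrite /q ltn_Pmull // | exact: cyc |].
  move=> u v s1 s2 /memP[i _ ->] /memP[j _ ->] [b1 [hb1 ->]] [b2 [hb2]].
  move=> /(congr1 val); rewrite !omegaX => /eqP; rewrite eqn_modDl => /eqP E.
  have Eb : b1 = b2.
    apply: (@mod_small_eq l b1 b2 hb1 hb2).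
    move: E => /(congr1 (modn^~ l)); rewrite !modn_dvdm ?dvdn_mull //.
    by rewrite !mulnDr !muln1 !mulnA (addnC b1) (addnC b2) !modnMDl.
  subst b2.
  move: E; rewrite !mulnDr !muln1 !mulnA => /eqP; rewrite eqn_modDl => /eqP.
  have bp : b1 < p by lia.
  have b0 : 0 < b1 by lia.
  move=> /(mulmod_cancel hl) /(mod_cancel (cpb _ b0 bp) (ltn_ord i) (ltn_ord j)) E.
  by rewrite (val_inj E).
have div : p - 1 = (p * l - 1) %/ l.
  have -> : p * l - 1 = (p - 1) * l + (l - 1) by rewrite mulnBl mul1n; lia.
  by rewrite divnMDl // divn_small ?addn0 //; lia.
split => //; split => //; rewrite card /q; exact: div.
Qed.
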